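(* Let $G=(V,E)$ be an $n$-node $d$-dimensional $\alpha$-quasi unit ball graph. Let $G_0=(V,E_0)$ be its spanning subgraph with $E_0=\{\{u,v\}\in E: |uv|\le \alpha/n\}$. Then the vertex set of every connected component of $G_0$ induces a clique in $G$.
   Context: A $d$-dimensional $\alpha$-quasi unit ball graph, for $0<\alpha\le1$, is a graph whose vertices correspond one-to-one to points of $\mathbb{R}^d$. Writing $|uv|$ for the Euclidean distance between the points of $u$ and $v$, it satisfies: $|uv|\le\alpha$ implies $\{u,v\}$ is an edge, and $|uv|>1$ implies $\{u,v\}$ is not an edge. *)

(* Defs.v *)
From mathcomp Require Import all_boot all_order all_algebra.
From mathcomp Require Import reals.
Set Implicit Arguments. Unset Strict Implicit. Unset Printing Implicit Defensive.
Import Order.TTheory GRing.Theory Num.Theory.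
Local Open Scope ring_scope.

Definition edist (R : realType) (d : nat) (x y : 'rV[R]_d) : R :=
  Num.sqrt (\sum_(i < d) (x 0 i - y 0 i) ^+ 2).

Definition simple_graph (V : finType) (e : rel V) : Prop :=
  symmetric e /\ irreflexive e.

Definition quasi_unit_ball_graph (R : realType) (d : nat) (alpha : R)
    (V : finType) (e : rel V) (p : V -> 'rV[R]_d) : Prop :=
  [/\ 0 < alpha /\ alpha <= 1, simple_graph e, injective p,
      (forall u v, u != v -> edist (p u) (p v) <= alpha -> e u v) &
      (forall u v, 1 < edist (p u) (p v) -> ~~ e u v)].

Definition short_edges (R : realType) (d : nat) (V : finType) (e : rel V)
    (p : V -> 'rV[R]_d) (bound : R) : rel V :=
  fun u v => e u v && (edist (p u) (p v) <= bound).

Definition is_clique (V : finType) (e : rel V) (S : {set V}) : Prop :=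
  forall u v, u \in S -> v \in S -> u != v -> e u v.

(* Main.v *)
Require Import Defs.
From mathcomp Require Import all_boot all_order all_algebra.
From mathcomp Require Import reals.
From mathcomp Require Import ring lra.
Import Order.TTheory GRing.Theory Num.Theory.
Local Open Scope ring_scope.

Lemma cs_ineq (R : realType) (d : nat) (a b : 'I_d -> R) :
  \sum_i a i * b i <= Num.sqrt (\sum_i a i ^+ 2) * Num.sqrt (\sum_i b i ^+ 2).
Proof.
set A := \sum_i a i ^+ 2; set B := \sum_i b i ^+ 2.
have A0 : 0 <= A by apply: sumr_ge0 => i _; exact: sqr_ge0.
have B0 : 0 <= B by apply: sumr_ge0 => i _; exact: sqr_ge0.
set s := Num.sqrt A; set t := Num.sqrt B.
have s0 : 0 <= s by exact: sqrtr_ge0.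
have t0 : 0 <= t by exact: sqrtr_ge0.
have sA : s ^+ 2 = A by exact: sqr_sqrtr.
have tB : t ^+ 2 = B by exact: sqr_sqrtr.
set X := \sum_i a i * b i.
have H : 0 <= \sum_i (t * a i - s * b i) ^+ 2.
  by apply: sumr_ge0 => i _; exact: sqr_ge0.
have E : \sum_i (t * a i - s * b i) ^+ 2 =
   t ^+ 2 * A - (2 * s * t) * X + s ^+ 2 * B.
  rewrite /A /B /X !mulr_sumr -sumrB -big_split /=.
  by apply: eq_bigr => i _; ring.
rewrite E sA tB in H.
have [st0|st0] := eqVneq (s * t) 0.
  move/eqP: st0; rewrite mulf_eq0 => /orP [] /eqP z.
  - have Az : A = 0 by rewrite -sA z expr0n.
    have : X = 0.
      rewrite /X big1 // => i _.
      have := psumr_eq0P (fun i _ => sqr_ge0 (a i)) Az (i := i) isT.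
      by move/eqP; rewrite sqrf_eq0 => /eqP ->; rewrite mul0r.
    by move=> ->; rewrite mulr_ge0.
  - have Bz : B = 0 by rewrite -tB z expr0n.
    have : X = 0.
      rewrite /X big1 // => i _.
      have := psumr_eq0P (fun i _ => sqr_ge0 (b i)) Bz (i := i) isT.
      by move/eqP; rewrite sqrf_eq0 => /eqP ->; rewrite mulr0.
    by move=> ->; rewrite mulr_ge0.
have stp : 0 < s * t by rewrite lt_def st0 mulr_ge0.
rewrite -sA -tB in H.
nra.
Qed.

Lemma edist_tri (R : realType) (d : nat) (x y z : 'rV[R]_d) :
  edist x z <= edist x y + edist y z.
Proof.
rewrite /edist.
set a := fun i => x 0 i - y 0 i. set b := fun i => y 0 i - z 0 i.
have -> : \sum_(i < d) (x 0 i - z 0 i) ^+ 2 =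
   \sum_i a i ^+ 2 + 2 * \sum_i a i * b i + \sum_i b i ^+ 2.
  rewrite mulr_sumr -!big_split /=; apply: eq_bigr => i _; rewrite /a /b; ring.
have := @cs_ineq R d a b.
set A := \sum_i a i ^+ 2; set B := \sum_i b i ^+ 2; set X := \sum_i a i * b i.
have A0 : 0 <= A by apply: sumr_ge0 => i _; exact: sqr_ge0.
have B0 : 0 <= B by apply: sumr_ge0 => i _; exact: sqr_ge0.
move=> HX.
have s0 := sqrtr_ge0 A; have t0 := sqrtr_ge0 B.
have sA : Num.sqrt A ^+ 2 = A by exact: sqr_sqrtr.
have tB : Num.sqrt B ^+ 2 = B by exact: sqr_sqrtr.
rewrite -[Num.sqrt A + _]ger0_norm ?addr_ge0 // -sqrtr_sqr ler_sqrt ?sqr_ge0 //.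
rewrite -{1}sA -{1}tB. nra.
Qed.

Lemma edistC (R : realType) (d : nat) (x y : 'rV[R]_d) : edist x y = edist y x.
Proof. by rewrite /edist; congr Num.sqrt; apply: eq_bigr => i _; ring. Qed.

Lemma path_bound (R : realType) (d : nat) (V : finType) (e : rel V)
    (p : V -> 'rV[R]_d) (b : R) (q : seq V) (x : V) :
  path (short_edges e p b) x q ->
  edist (p x) (p (last x q)) <= (size q)%:R * b.
Proof.
elim: q x => [|y q IH] x /=.
  by move=> _; rewrite /edist big1 ?sqrtr0 ?mul0r // => i _; rewrite subrr expr0n.
move=> /andP [/andP [_ hxy] hp].
have h1 := @edist_tri R d (p x) (p y) (p (last y q)).
have h2 := IH y hp.
rewrite -addn1 natrD mulrDl mul1r; lra.
Qed.

Theorem lemma2p1 (R : realType) (d n : nat) (alpha : R)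
    (V : finType) (e : rel V) (p : V -> 'rV[R]_d) :
  #|V| = n ->
  quasi_unit_ball_graph alpha e p ->
  forall x : V,
    is_clique e [set y | connect (short_edges e p (alpha / n%:R)) x y].
Proof.
move=> hn [[a0 a1] [sym irr] inj Hclose Hfar] x u v.
rewrite !inE => Hu Hv Huv.
set r := short_edges e p (alpha / n%:R).
have symr : symmetric r.
  by move=> y z; rewrite /r /short_edges sym edistC.
have cs := sym_connect_sym symr.
have Huv' : connect r u v by rewrite (connect_trans _ Hv) // cs.
apply: Hclose => //.
case/connectP: Huv' => q hq ->.
case: (shortenP hq) => q' hq' hu _.
apply: le_trans (@path_bound R d V e p _ _ _ hq') _.
have hsz : (size q' < n)%N.
  have := max_card (mem (u :: q')).
  by rewrite (card_uniqP hu) /= hn.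
have n0 : (0 < n)%N by case: (n) hsz.
have nR : 0 < n%:R :> R by rewrite ltr0n.
rewrite mulrA ler_pdivrMr // mulrC ler_wpM2l ?ltW // ltr_nat; exact: hsz.
Qed.
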